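(* For all integers $D$ and $a$ there exists $T$ such that if $G$ is a clique-sum of graphs each having at most $a$ vertices of degree greater than $D$, then $G$ has $\infty$-admissibility at most $T$.
   Context: All graphs are finite and simple. Given an ordering $v_1,\ldots,v_n$ of $V(G)$, the $\infty$-backconnectivity of $v_k$ is the maximum number of paths (of any length) from $v_k$ to $\{v_1,\ldots,v_{k-1}\}$ that pairwise intersect only in $v_k$. The $\infty$-admissibility of the ordering is the maximum $\infty$-backconnectivity of its vertices, and the $\infty$-admissibility of $G$ is the minimum over all orderings. A clique-sum of $G_1$ and $G_2$ is obtained by identifying the vertices of a clique in $G_1$ with those of an equal-size clique in $G_2$ and possibly deleting some edges; a clique-sum of several graphs is obtained by repeated clique-sums. *)

(* Defs.v *)
From mathcomp Require Import all_boot.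
Set Implicit Arguments. Unset Strict Implicit. Unset Printing Implicit Defensive.

Definition simple_graph (V : finType) (e : rel V) : Prop :=
  symmetric e /\ irreflexive e.

Definition degree (V : finType) (e : rel V) (x : V) : nat := #|[set y | e x y]|.

Definition few_high_degree (D a : nat) (V : finType) (e : rel V) : Prop :=
  #|[set x | D < degree e x]| <= a.

Definition is_clique (V : finType) (e : rel V) (K : pred V) : Prop :=
  forall x y, K x -> K y -> x != y -> e x y.

(* (V, e) is a clique-sum of (V1, e1) and (V2, e2): V is covered by injective
   copies f1(V1), f2(V2); their overlap is the image of a clique K1 of e1 and of
   a clique K2 of e2 (identified by f2^-1 o f1, so |K1| = |K2|); every edge of
   G comes from an edge of G1 or G2; every edge of G1, G2 not inside the
   identified clique is kept (edges inside the clique may be deleted). *)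
Definition is_clique_sum (V1 : finType) (e1 : rel V1) (V2 : finType) (e2 : rel V2)
    (V : finType) (e : rel V) : Prop :=
  exists (f1 : V1 -> V) (f2 : V2 -> V),
    [/\ injective f1, injective f2,
        (forall x, (exists y, f1 y = x) \/ (exists y, f2 y = x)),
        is_clique e1 (fun y => [exists z, f2 z == f1 y]) &
        is_clique e2 (fun z => [exists y, f1 y == f2 z])] /\
    [/\ (forall y y', e1 y y' ->
           ~ ([exists z, f2 z == f1 y] /\ [exists z, f2 z == f1 y']) ->
           e (f1 y) (f1 y')),
        (forall z z', e2 z z' ->
           ~ ([exists y, f1 y == f2 z] /\ [exists y, f1 y == f2 z']) ->
           e (f2 z) (f2 z')) &
        (forall x x', e x x' ->
           (exists y y', [/\ f1 y = x, f1 y' = x' & e1 y y']) \/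
           (exists z z', [/\ f2 z = x, f2 z' = x' & e2 z z']))].

Inductive clique_sum_of (P : forall V : finType, rel V -> Prop) :
    forall V : finType, rel V -> Prop :=
  | cs_base (V : finType) (e : rel V) :
      simple_graph e -> P V e -> clique_sum_of P e
  | cs_step (V1 : finType) (e1 : rel V1) (V2 : finType) (e2 : rel V2)
      (V : finType) (e : rel V) :
      clique_sum_of P e1 -> clique_sum_of P e2 ->
      simple_graph e -> is_clique_sum e1 e2 e -> clique_sum_of P e.

(* An ordering of V is given by an injective rank function r : V -> nat
   (u comes before v iff r u < r v).
   A back-path of v w.r.t. r: a path v = x0, x1, ..., xk (k >= 1) in e, with
   distinct vertices, whose last vertex is earlier than v and whose other
   vertices are not earlier than v (a path from v to {earlier vertices}). *)
Definition back_path (V : finType) (e : rel V) (r : V -> nat) (v : V)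
    (q : seq V) : Prop :=
  [/\ q != [::], path e v q, uniq (v :: q), r (last v q) < r v &
      all (fun x => r v <= r x) (belast v q)].

(* A family is a list ps of tails q (each path is v :: q). *)
Definition backconn_le (V : finType) (e : rel V) (r : V -> nat) (v : V)
    (t : nat) : Prop :=
  forall ps : seq (seq V),
    (forall q, q \in ps -> back_path e r v q) ->
    (forall i j x, i < j < size ps ->
        x \in v :: nth [::] ps i -> x \in v :: nth [::] ps j -> x = v) ->
    size ps <= t.

Definition inf_adm_le (V : finType) (e : rel V) (t : nat) : Prop :=
  exists r : V -> nat, injective r /\ forall v, backconn_le e r v t.

(* Main.v *)
Require Import Defs.
From mathcomp Require Import all_boot zify.
Set Implicit Arguments. Unset Strict Implicit. Unset Printing Implicit Defensive.

Lemma belast_char (T : eqType) (v : T) q x : uniq (v :: q) ->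
  (x \in belast v q) = (x \in v :: q) && (x != last v q).
Proof.
move=> u; move: u; rewrite (lastI v q) rcons_uniq mem_rcons inE => /andP[nl _].
by case: eqP => [->|_]; [rewrite (negbTE nl) | rewrite andbT].
Qed.

Lemma last_filter (T : eqType) (P : pred T) x s :
  P x -> P (last x s) -> last x (filter P s) = last x s.
Proof.
elim: s x => [|y s IH] x Px //=.
case: ifP => Py /=.
  by move=> Pl; apply: IH.
move: IH; case: s => [|z s] IH /= Pl; first by rewrite Pl in Py.
exact: IH.
Qed.

Lemma path_shortcut (T : eqType) (e e' : rel T) (P Q : pred T) :
 (forall a b, P a -> P b -> e a b -> e' a b) ->
 (forall a b, P a -> ~~ P b -> e a b -> Q a) ->
 (forall a b, ~~ P a -> P b -> e a b -> Q b) ->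
 (forall a b, Q a -> Q b -> a != b -> P a -> P b -> e' a b) ->
 forall s p x, P p -> (x = p \/ (~~ P x /\ Q p)) -> path e x s -> P (last x s) ->
   uniq (p :: filter P s) -> path e' p (filter P s).
Proof.
move=> H1 H2 H3 H4; elim=> [|y s IH] p x Pp Hx //= /andP[exy pys] Pl.
case: ifP => Py Hu.
- move: Hu; rewrite /= inE negb_or => /andP[/andP[npy _] Hu].
  apply/andP; split.
  + case: Hx => [Ex|[nPx Qp]]; first by subst x; exact: H1.
    by apply: H4 => //; exact: H3 exy.
  + by apply: (IH y y) => //; left.
- apply: (IH p y) => //; right; split; first by rewrite Py.
  case: Hx => [Ex|[]//]; subst x; apply: H2 exy => //; by rewrite Py.
Qed.

Lemma path_sub_belast (T : eqType) (e e' : rel T) (N : pred T) x s :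
  path e x s -> all N (belast x s) -> (forall a b, N a -> e a b -> e' a b) ->
  path e' x s.
Proof.
elim: s x => //= y s IH x /andP[exy pys] /andP[Nx Nb] H.
by rewrite (H _ _ Nx exy) /=; apply: IH.
Qed.

Lemma path_all_snd (T : eqType) (Q : pred T) x s :
  path (fun _ b => Q b) x s -> all Q s.
Proof. by elim: s x => //= y s IH x /andP[-> /IH]. Qed.

Lemma bc_bound (V : finType) (e : rel V) r v (S : {set V}) (h : seq V -> V) t :
  (forall q, back_path e r v q -> h q \in q /\ h q \in S) -> #|S| <= t ->
  backconn_le e r v t.
Proof.
move=> Hh HS ps Hps Hdis.
have key : forall i j, i < j < size ps -> h (nth [::] ps i) != h (nth [::] ps j).
  move=> i j /andP[lij ljs]; have lis : i < size ps by apply: ltn_trans ljs.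
  have [hi _] := Hh _ (Hps _ (mem_nth [::] lis)).
  have [hj _] := Hh _ (Hps _ (mem_nth [::] ljs)).
  apply/eqP => E.
  have hi' : h (nth [::] ps i) \in v :: nth [::] ps i by rewrite inE hi orbT.
  have hj' : h (nth [::] ps i) \in v :: nth [::] ps j by rewrite inE E hj orbT.
  have Ev := Hdis i j _ (introT andP (conj lij ljs)) hi' hj'.
  have [_ _ u _ _] := Hps _ (mem_nth [::] lis).
  by move: u; rewrite /= -Ev hi.
have Hu : uniq (map h ps).
  apply/(uniqP v) => i j; rewrite !inE size_map => Hi Hj.
  rewrite (nth_map [::]) // (nth_map [::]) // => E.
  case: (ltngtP i j) => // lt.
    by move: (key i j); rewrite lt Hj /= E eqxx => /(_ isT).
  by move: (key j i); rewrite lt Hi /= E eqxx => /(_ isT).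
rewrite -(size_map h) -(card_uniqP Hu); apply: leq_trans HS.
apply: subset_leq_card; apply/subsetP => x /mapP [q qin ->].
by have [] := Hh _ (Hps _ qin).
Qed.

Lemma bc_transfer (V W : finType) (e : rel V) (e' : rel W) (r : V -> nat)
  (r' : W -> nat) (v : V) (g : V -> W) (P : pred V) (tr : seq V -> seq W) t :
  (forall w w', P w -> P w' -> g w = g w' -> w = w') ->
  (forall q, back_path e r v q -> back_path e' r' (g v) (tr q)) ->
  (forall q x, back_path e r v q -> x \in g v :: tr q ->
      exists2 w, w \in v :: q & (P w /\ x = g w)) ->
  backconn_le e' r' (g v) t -> backconn_le e r v t.
Proof.
move=> ginj Htr Hmem Hbc ps Hps Hdis.
rewrite -(size_map tr); apply: Hbc.
- by move=> q' /mapP [q qin ->]; exact: Htr (Hps _ qin).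
- move=> i j x /andP[lij ljs]; rewrite size_map in ljs.
  have lis : i < size ps by apply: ltn_trans ljs.
  rewrite (nth_map [::]) // (nth_map [::]) // => xi xj.
  have [wi wiin [Pwi Ewi]] := Hmem _ _ (Hps _ (mem_nth [::] lis)) xi.
  have [wj wjin [Pwj Ewj]] := Hmem _ _ (Hps _ (mem_nth [::] ljs)) xj.
  rewrite Ewi in Ewj; have E := ginj _ _ Pwi Pwj Ewj; subst wj.
  by rewrite Ewi (Hdis i j wi (introT andP (conj lij ljs)) wiin wjin).
Qed.

Definition good (t : nat) (V : finType) (e : rel V) : Prop :=
  forall K : {set V}, is_clique e (fun x => x \in K) ->
  exists r : V -> nat, [/\ injective r,
     (forall x y, x \in K -> y \notin K -> r x < r y) &
     forall v, backconn_le e r v t].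

Lemma base_good D a (V : finType) (e : rel V) :
  few_high_degree D a e -> good (a + a + D.+1) e.
Proof.
rewrite /few_high_degree => HH K HK.
set H := [set x | D < degree e x] in HH.
have Hmem : forall x, (x \in H) = (D < degree e x) by move=> x; rewrite inE.
clearbody H.
have cardK : #|K| <= a + D.+1.
  case: (leqP #|K| D.+1) => [l|l]; first exact: leq_trans l (leq_addl _ _).
  apply: leq_trans (leq_addr _ _); apply: leq_trans HH.
  apply: subset_leq_card; apply/subsetP => x xK; rewrite Hmem /degree.
  move: l; rewrite (cardsD1 x K) xK add1n ltnS => l.
  apply: (leq_trans l); apply: subset_leq_card; apply/subsetP => y.
  rewrite !inE => /andP[nyx yK]; apply: HK => //; by rewrite eq_sym.
pose n := #|V|.
pose cls x := if x \in K then 0 else if x \in H then 1 else 2.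
pose r x := cls x * n + enum_rank x.
have rk (x : V) : enum_rank x < n := ltn_ord (enum_rank x).
have rmod (x : V) : r x %% n = enum_rank x.
  by rewrite /r modnMDl modn_small.
exists r; split.
- move=> x y E; apply: enum_rank_inj; apply: val_inj => /=.
  by rewrite -rmod E rmod.
- move=> x y xK yK; rewrite /r /cls xK (negbTE yK) /=.
  have := rk x; case: (y \in H) => /=; lia.
- move=> v.
  case: (boolP ((v \in K) || (v \in H))) => vKH.
    apply: (bc_bound (S := [set x | r x < r v]) (h := fun q => last v q)).
      move=> q [qn pth u lt _]; rewrite inE lt; split => //.
      move: (mem_last v q); rewrite inE => /orP[/eqP E|] //.
      by rewrite E ltnn in lt.
    apply: (@leq_trans #|K :|: H|).
      apply: subset_leq_card; apply/subsetP => x; rewrite !inE => lt.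
      apply/negPn/negP; rewrite negb_or => /andP[nxK nxH].
      move: lt; rewrite /r /cls (negbTE nxK) (negbTE nxH).
      have := rk v; case: (v \in K) vKH => /=.
        by move=> _; lia.
      by move=> ->; lia.
    rewrite cardsU; lia.
  apply: (bc_bound (S := [set y | e v y]) (h := fun q => head v q)).
    case=> [|x q] [qn pth _ _ _] //; move: pth => /= /andP[evx _]; by rewrite !inE eqxx evx.
  move: vKH; rewrite negb_or => /andP[_ vH]; move: vH; rewrite Hmem -leqNgt => l.
  move: l; rewrite /degree; lia.
Qed.

Lemma step1 t (V1 V2 V : finType) (e1 : rel V1) (e2 : rel V2) (e : rel V)
  (f1 : V1 -> V) (f2 : V2 -> V) :
  good t e1 -> good t e2 -> irreflexive e ->
  injective f1 -> injective f2 ->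
  (forall x, (exists y, f1 y = x) \/ (exists y, f2 y = x)) ->
  is_clique e1 (fun y => [exists z, f2 z == f1 y]) ->
  is_clique e2 (fun z => [exists y, f1 y == f2 z]) ->
  (forall x x', e x x' ->
     (exists y y', [/\ f1 y = x, f1 y' = x' & e1 y y']) \/
     (exists z z', [/\ f2 z = x, f2 z' = x' & e2 z z'])) ->
  forall K : {set V}, is_clique e (fun x => x \in K) ->
  (forall x, x \in K -> exists y, f1 y = x) ->
  exists r : V -> nat, [/\ injective r,
     (forall x y, x \in K -> y \notin K -> r x < r y) &
     forall v, backconn_le e r v t].
Proof.
move=> G1 G2 irr inj1 inj2 cov cl1 cl2 E3 K HK KIm.
pose Im1 : pred V := fun x => [exists y, f1 y == x].
pose Im2 : pred V := fun x => [exists z, f2 z == x].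
have Im1f y : Im1 (f1 y) by apply/existsP; exists y.
have Im2f z : Im2 (f2 z) by apply/existsP; exists z.
have e1lift y y' : e (f1 y) (f1 y') -> e1 y y'.
  move=> ee; have nyy : y != y'.
    by apply/eqP => E; subst y'; rewrite irr in ee.
  case: (E3 _ _ ee) => [[u [u' [/inj1 -> /inj1 -> //]]]|[z [z' [Ez Ez' _]]]].
  apply: cl1 nyy; apply/existsP; [exists z | exists z']; by apply/eqP.
pose K1 := [set y | f1 y \in K].
have cK1 : is_clique e1 (fun y => y \in K1).
  move=> y y'; rewrite !inE => yK y'K nyy; apply: e1lift; apply: HK => //.
  by apply: contra nyy => /eqP /inj1 ->.
pose C2 := [set z | [exists y, f1 y == f2 z]].
have cC2 : is_clique e2 (fun z => z \in C2).
  by move=> z z'; rewrite !inE; exact: cl2.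
have [r1 [ir1 first1 bc1]] := G1 K1 cK1.
have [r2 [ir2 first2 bc2]] := G2 C2 cC2.
pose M := \max_(y : V1) (r1 y).+1.
have r1M y : r1 y < M by rewrite /M (bigD1 y) //= leq_max leqnn.
pose r (x : V) := match [pick y | f1 y == x] with
  | Some y => r1 y
  | None => match [pick z | f2 z == x] with Some z => M + r2 z | None => 0 end
  end.
have rf1 y : r (f1 y) = r1 y.
  rewrite /r; case: pickP => [y' /eqP /inj1 -> // | /(_ y)]; by rewrite eqxx.
have rf2 z : ~~ Im1 (f2 z) -> r (f2 z) = M + r2 z.
  move=> nI; rewrite /r; case: pickP => [y' Hy' | _].
    by move: nI; rewrite /Im1; case/existsP; exists y'.
  case: pickP => [z' /eqP /inj2 -> // | /(_ z)]; by rewrite eqxx.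
have classify x : Im1 x \/ (~~ Im1 x /\ exists z, f2 z = x).
  case: (boolP (Im1 x)) => Ix; [by left | right; split => //].
  case: (cov x) => // [[y Ey]]; by move: Ix; rewrite -Ey Im1f.
have Im1lt x : Im1 x -> r x < M.
  by case/existsP => y /eqP <-; rewrite rf1.
have nIm1ge x : ~~ Im1 x -> M <= r x.
  case: (classify x) => [->//|[_ [z <-]] nI]; by rewrite rf2 // leq_addr.
have Im1P x : Im1 x -> exists y, f1 y = x by case/existsP => y /eqP <-; exists y.
exists r; split.
- move=> x x' E.
  case: (classify x) => [/Im1P [y Ey]|[nI [z Ez]]];
  case: (classify x') => [/Im1P [y' Ey']|[nI' [z' Ez']]]; subst x x'.
  + by move: E; rewrite !rf1 => E; rewrite (ir1 _ _ E).
  + by have := nIm1ge _ nI'; rewrite -E rf1 leqNgt r1M.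
  + by have := nIm1ge _ nI; rewrite E rf1 leqNgt r1M.
  + move: E; rewrite !rf2 // => /eqP; rewrite eqn_add2l => /eqP E.
    by rewrite (ir2 _ _ E).
- move=> x x' xK x'K; have [y Ey] := KIm x xK; subst x.
  case: (classify x') => [/Im1P [y' Ey']|[nI' _]].
    subst x'; rewrite !rf1; apply: first1; by rewrite inE.
  by apply: leq_trans (nIm1ge _ nI'); rewrite rf1.
- move=> v; case: (classify v) => [/Im1P [y0 Ev]|[nIv [z0 Ev]]].
  +
    pose g1 (x : V) := odflt y0 [pick y | f1 y == x].
    have g1f y : g1 (f1 y) = y.
      rewrite /g1; case: pickP => [y' /eqP /inj1 -> // | /(_ y)]; by rewrite eqxx.
    have f1g x : Im1 x -> f1 (g1 x) = x by case/Im1P => y <-; rewrite g1f.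
    subst v; have bcA : backconn_le e1 r1 (g1 (f1 y0)) t by rewrite g1f.
    apply: (bc_transfer (g := g1) (P := Im1)
      (tr := fun q => map g1 (filter Im1 q)) _ _ _ bcA).
    * by move=> w w' Iw Iw' E; rewrite -(f1g w Iw) -(f1g w' Iw') E.
    * move=> q [qn pth uq lt bl].
      have Ilast : Im1 (last (f1 y0) q).
        case: (boolP (Im1 (last (f1 y0) q))) => // nI.
        have h1 := nIm1ge _ nI; have h2 := r1M y0; rewrite rf1 in lt; lia.
      have lqin : last (f1 y0) q \in filter Im1 q.
        rewrite mem_filter Ilast /=.
        move: (mem_last (f1 y0) q); rewrite inE => /orP[/eqP E|//].
        by rewrite E ltnn in lt.
      have uf : uniq (f1 y0 :: filter Im1 q).
        by have := filter_uniq Im1 uq; rewrite /= Im1f.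
      have Emap : y0 :: map g1 (filter Im1 q) = map g1 (f1 y0 :: filter Im1 q).
        by rewrite /= g1f.
      have lastE : last y0 (map g1 (filter Im1 q)) = g1 (last (f1 y0) q).
        by rewrite -{1}(g1f y0) last_map (last_filter (Im1f y0) Ilast).
      have uq' : uniq (y0 :: map g1 (filter Im1 q)).
        rewrite Emap map_inj_in_uniq // => w w' win w'in E.
        have Iw : Im1 w by move: win; rewrite inE => /orP[/eqP ->|]; [exact: Im1f | rewrite mem_filter => /andP[]].
        have Iw' : Im1 w' by move: w'in; rewrite inE => /orP[/eqP ->|]; [exact: Im1f | rewrite mem_filter => /andP[]].
        by rewrite -(f1g w Iw) -(f1g w' Iw') E.
      rewrite g1f; split => //.
      -- by case: (filter Im1 q) lqin.
      -- rewrite -{1}(g1f y0) path_map.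
         apply: (path_shortcut (Q := Im2) _ _ _ _ (Im1f y0) (or_introl erefl) pth Ilast uf).
         ++ move=> x x' Ix Ix' ee; apply: e1lift; by rewrite !f1g.
         ++ move=> x x' Ix nIx' ee; case: (E3 _ _ ee) => [[u [u' [_ Eu' _]]]|[z [z' [Ez _ _]]]].
              by rewrite -Eu' Im1f in nIx'.
            by rewrite -Ez Im2f.
         ++ move=> x x' nIx Ix' ee; case: (E3 _ _ ee) => [[u [u' [Eu _ _]]]|[z [z' [_ Ez' _]]]].
              by rewrite -Eu Im1f in nIx.
            by rewrite -Ez' Im2f.
         ++ move=> x x' Qx Qx' nxx Ix Ix' /=; apply: cl1.
              by rewrite f1g.
              by rewrite f1g.
            by apply: contra nxx => /eqP E; rewrite -(f1g x Ix) -(f1g x' Ix') E.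
      -- by rewrite lastE -(rf1 (g1 _)) f1g // -(rf1 y0).
      -- apply/allP => x xin; move: xin; rewrite belast_char // Emap lastE.
         case/andP => /mapP [w win ->] neq.
         have Iw : Im1 w.
           by move: win; rewrite inE => /orP[/eqP ->|]; [exact: Im1f | rewrite mem_filter => /andP[]].
         have wq : w \in f1 y0 :: q.
           by move: win; rewrite !inE mem_filter => /orP[->|/andP[_ ->]]; rewrite ?orbT.
         have wneq : w != last (f1 y0) q by apply: contra neq => /eqP ->.
         have wb : w \in belast (f1 y0) q by rewrite belast_char // wq wneq.
         have le := allP bl w wb.
         by rewrite -(rf1 (g1 w)) f1g // -(rf1 y0).
    * move=> q x _; rewrite inE => /orP[/eqP ->|/mapP [w win ->]].
        by exists (f1 y0); [exact: mem_head | split; [exact: Im1f|]].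
      move: win; rewrite mem_filter => /andP[Iw wq].
      by exists w; [rewrite inE wq orbT|].
  +
    subst v.
    pose g2 (x : V) := odflt z0 [pick z | f2 z == x].
    have g2f z : g2 (f2 z) = z.
      rewrite /g2; case: pickP => [z' /eqP /inj2 -> // | /(_ z)]; by rewrite eqxx.
    have Im2P x : Im2 x -> exists z, f2 z = x by case/existsP => z /eqP <-; exists z.
    have f2g x : Im2 x -> f2 (g2 x) = x by case/Im2P => z <-; rewrite g2f.
    have bcB : backconn_le e2 r2 (g2 (f2 z0)) t by rewrite g2f.
    have Nbel q : back_path e r (f2 z0) q -> all (fun x => ~~ Im1 x) (belast (f2 z0) q).
      move=> [_ _ _ _ bl]; apply/allP => x xin; have /= le := allP bl x xin.
      apply/negP => Ix; have := Im1lt _ Ix; have := nIm1ge _ nIv; lia.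
    have edgeN a b : ~~ Im1 a -> e a b -> [&& Im2 a, Im2 b & e2 (g2 a) (g2 b)].
      move=> nIa ee; case: (E3 _ _ ee) => [[u [u' [Eu _ _]]]|[z [z' [Ez Ez' ee2]]]].
        by rewrite -Eu Im1f in nIa.
      by rewrite -Ez -Ez' !Im2f !g2f.
    have allI q : back_path e r (f2 z0) q -> all Im2 (f2 z0 :: q).
      move=> bp; rewrite /= Im2f /=; apply: (@path_all_snd _ Im2 (f2 z0)).
      apply: (path_sub_belast (e := e) _ (Nbel _ bp)) => [|a b nIa ee]; first by move: bp => [_ ? _ _ _].
      by case/and3P: (edgeN a b nIa ee).
    apply: (bc_transfer (g := g2) (P := Im2) (tr := map g2) _ _ _ bcB).
    * by move=> w w' Iw Iw' E; rewrite -(f2g w Iw) -(f2g w' Iw') E.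
    * move=> q bp; have AI := allI q bp; have [qn pth uq lt bl] := bp.
      have Emap : z0 :: map g2 q = map g2 (f2 z0 :: q) by rewrite /= g2f.
      have uq' : uniq (z0 :: map g2 q).
        rewrite Emap map_inj_in_uniq // => w w' win w'in E.
        by rewrite -(f2g w (allP AI w win)) -(f2g w' (allP AI w' w'in)) E.
      have lastE : last z0 (map g2 q) = g2 (last (f2 z0) q).
        by rewrite -{1}(g2f z0) last_map.
      rewrite g2f; split => //.
      -- by rewrite -size_eq0 size_map size_eq0.
      -- rewrite -{1}(g2f z0) path_map.
         apply: (path_sub_belast pth (Nbel _ bp)) => a b nIa ee /=.
         by case/and3P: (edgeN a b nIa ee).
      -- rewrite lastE; set L := last (f2 z0) q.
         have IL : Im2 L := allP AI L (mem_last _ _).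
         case: (boolP (Im1 L)) => IL1.
           apply: first2; rewrite inE; first by rewrite f2g.
           exact: nIv.
         have nIL2 : ~~ Im1 (f2 (g2 L)) by rewrite f2g.
         move: lt; rewrite -/L -{1}(f2g L IL) (rf2 _ nIL2) (rf2 _ nIv).
         by rewrite ltn_add2l.
      -- apply/allP => x xin; move: xin; rewrite belast_char // Emap lastE.
         case/andP => /mapP [w win ->] neq.
         have Iw := allP AI w win.
         have wneq : w != last (f2 z0) q by apply: contra neq => /eqP ->.
         have wb : w \in belast (f2 z0) q by rewrite belast_char // win wneq.
         have le := allP bl w wb.
         have nIw := allP (Nbel q bp) w wb.
         have nIw2 : ~~ Im1 (f2 (g2 w)) by rewrite f2g.
         move: le; rewrite /= -{1}(f2g w Iw) (rf2 _ nIw2).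
         by rewrite (rf2 _ nIv) leq_add2l.
    * move=> q x bp.
      rewrite -[g2 (f2 z0) :: _]/(map g2 (f2 z0 :: q)) => /mapP [w win ->].
      by exists w => //; split => //; exact: allP (allI q bp) w win.
Qed.

Lemma step_good t (V1 V2 V : finType) (e1 : rel V1) (e2 : rel V2) (e : rel V) :
  good t e1 -> good t e2 -> simple_graph e -> is_clique_sum e1 e2 e -> good t e.
Proof.
move=> G1 G2 [_ irr] [f1 [f2 [[inj1 inj2 cov cl1 cl2] [_ _ E3]]]] K HK.
case: (boolP [forall x in K, [exists y, f1 y == x]]) => H.
  apply: (step1 G1 G2 irr inj1 inj2 cov cl1 cl2 E3 HK) => x xK.
  by move/forall_inP: H => /(_ x xK) /existsP [y /eqP <-]; exists y.
have cov' x : (exists y, f2 y = x) \/ (exists y, f1 y = x) by case: (cov x); auto.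
have E3' x x' : e x x' ->
     (exists z z', [/\ f2 z = x, f2 z' = x' & e2 z z']) \/
     (exists y y', [/\ f1 y = x, f1 y' = x' & e1 y y']).
  by move=> ee; case: (E3 x x' ee); auto.
apply: (step1 G2 G1 irr inj2 inj1 cov' cl2 cl1 E3' HK) => x xK.
move/forall_inPn: H => [x0 x0K nI].
have nI' : forall y, f1 y != x0 by move=> y; apply: contra nI => Ey; apply/existsP; exists y.
have [E|nE] := eqVneq x x0.
  subst x; case: (cov x0) => // [[y Ey]]; by move: (nI' y); rewrite Ey eqxx.
have ee : e x0 x by apply: HK => //; rewrite eq_sym.
case: (E3 _ _ ee) => [[u [u' [Eu _ _]]]|[z [z' [_ Ez' _]]]].
  by move: (nI' u); rewrite Eu eqxx.
by exists z'.
Qed.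

Theorem theorem6 : forall D a : nat, exists T : nat,
  forall (V : finType) (e : rel V),
    simple_graph e ->
    clique_sum_of (few_high_degree D a) e ->
    inf_adm_le e T.
Proof.
move=> D a; exists (a + a + D.+1) => V e _ cs.
have G : good (a + a + D.+1) e.
  elim: cs => {V e} V e.
    by move=> _ HP; apply: base_good.
  move=> V2 e2 V' e' _ G1 _ G2 sg cs; exact: step_good G1 G2 sg cs.
have [|r [ir _ bc]] := G set0.
  by move=> x y; rewrite inE.
by exists r.
Qed.
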